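(* Let $A_1,\dots,A_k$ be $2\times2$ real matrices with all entries strictly positive and norm $<1$, $d_i\in\mathbb R^2$, $T_i(x)=A_ix+d_i$, with $T_i(D)\subset D$ for all $i$ ($D$ the closed unit disc). There exists a constant $C$ such that for all $\theta,\theta'\in\mathcal Q_2$, all $n\in\mathbb N$ and all $\underline a\in\Sigma=\{1,\dots,k\}^{\mathbb N}$, \[ |a_1\cdots a_n|_\theta-|a_1\cdots a_n|_{\theta'}\le C\,|\theta-\theta'|. \]
   Context: $\mathbb{PR}^1$ is the space of lines through the origin, parametrised by the angle $\theta$ with the horizontal axis, and $|\theta-\theta'|$ is the angular distance. $\mathcal Q_2\subset\mathbb{PR}^1$ is the closed set of lines contained in the union of the closed second and fourth quadrants. For $\theta\in\mathbb{PR}^1$, $\pi_\theta$ is orthogonal projection onto the line through the origin perpendicular to $\theta$. For a word $w=a_1\cdots a_n$, $D_w=T_{a_1}\circ\cdots\circ T_{a_n}(D)$ and $|w|_\theta=-\log_2(|\pi_\theta(D_w)|/2)$, where $|\cdot|$ is the length of an interval. *)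

(* Defs.v *)
From Stdlib Require Import Reals.
From Coquelicot Require Import Coquelicot.
Open Scope R_scope.

Definition vec2 := (R * R)%type.

Record mat2 := Mat2 { m11 : R; m12 : R; m21 : R; m22 : R }.

Definition mat_apply (A : mat2) (x : vec2) : vec2 :=
  (m11 A * fst x + m12 A * snd x, m21 A * fst x + m22 A * snd x).

Definition dot2 (x y : vec2) : R := fst x * fst y + snd x * snd y.

Definition norm2 (x : vec2) : R := sqrt (fst x ^ 2 + snd x ^ 2).

Definition op_norm (A : mat2) : Rbar :=
  Lub_Rbar (fun r => exists x : vec2, norm2 x <= 1 /\ r = norm2 (mat_apply A x)).

Definition mat_pos (A : mat2) : Prop :=
  0 < m11 A /\ 0 < m12 A /\ 0 < m21 A /\ 0 < m22 A.

Definition unit_disc (x : vec2) : Prop := norm2 x <= 1.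

Definition affine (A : mat2) (d : vec2) (x : vec2) : vec2 :=
  (fst (mat_apply A x) + fst d, snd (mat_apply A x) + snd d).

(* word_map A d a n = T_{a 0} o T_{a 1} o ... o T_{a (n-1)}
   (the word a_1 ... a_n of the paper, indexed from 0). *)
Fixpoint word_map (A : nat -> mat2) (d : nat -> vec2) (a : nat -> nat) (n : nat)
  (x : vec2) : vec2 :=
  match n with
  | O => x
  | S m => word_map A d a m (affine (A (a m)) (d (a m)) x)
  end.

Definition D_word (A : nat -> mat2) (d : nat -> vec2) (a : nat -> nat) (n : nat)
  (y : vec2) : Prop :=
  exists x, unit_disc x /\ y = word_map A d a n x.

(* The line through the origin at angle theta has direction (cos t, sin t);
   pi_theta projects orthogonally onto the perpendicular line, spanned by the
   unit vector (-sin t, cos t). The projection of a set S is identified with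
   the set of its coordinates along that unit vector. *)
Definition perp_dir (theta : R) : vec2 := (- sin theta, cos theta).

Definition proj_coords (theta : R) (S : vec2 -> Prop) (t : R) : Prop :=
  exists y, S y /\ t = dot2 y (perp_dir theta).

Definition proj_length (theta : R) (S : vec2 -> Prop) : R :=
  real (Lub_Rbar (proj_coords theta S)) - real (Glb_Rbar (proj_coords theta S)).

Definition log2 (x : R) : R := ln x / ln 2.

Definition word_size (A : nat -> mat2) (d : nat -> vec2) (a : nat -> nat) (n : nat)
  (theta : R) : R :=
  - log2 (proj_length theta (D_word A d a n) / 2).

(* Q_2: lines in the union of the closed 2nd and 4th quadrants, i.e. angles in
   [pi/2, pi] (pi identified with 0 in PR^1). On this arc the angular distance in
   PR^1 coincides with the ordinary real distance |theta - theta'|. *)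
Definition in_Q2 (theta : R) : Prop := PI / 2 <= theta <= PI.

(* Main.v *)
Require Import Defs.
From Stdlib Require Import Reals Lra Psatz.
From Coquelicot Require Import Coquelicot.
Open Scope R_scope.

Lemma trig_lip (p r t t' : R) : 0 <= p -> 0 <= r ->
  (p * sin t' - r * cos t') - (p * sin t - r * cos t) <= (p + r) * Rabs (t' - t).
Proof.
  intros hp hr.
  destruct (MVT_abs (mult_real_fct p sin - mult_real_fct r cos)%F
     (fun x => p * cos x - r * (- sin x)) t t') as [c [Hc _]].
  { intros c _. apply derivable_pt_lim_minus; apply derivable_pt_lim_scal;
    [apply derivable_pt_lim_sin | apply derivable_pt_lim_cos]. }
  unfold minus_fct, mult_real_fct in Hc.
  assert (Hb : Rabs (p * cos c - r * - sin c) <= p + r).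
  { pose proof (SIN_bound c); pose proof (COS_bound c).
    apply Rabs_le; split; nra. }
  pose proof (Rabs_pos (t' - t)).
  pose proof (Rle_abs ((p * sin t' - r * cos t') - (p * sin t - r * cos t))).
  rewrite Hc in H0. nra.
Qed.

Lemma q2_facts t : in_Q2 t -> 0 <= sin t /\ cos t <= 0 /\ 1 <= sin t - cos t.
Proof.
  unfold in_Q2; intros [h1 h2]. pose proof PI_RGT_0.
  assert (0 <= sin t) by (apply sin_ge_0; lra).
  assert (cos t <= 0) by (apply cos_le_0; lra).
  pose proof (sin2_cos2 t). unfold Rsqr in H2.
  repeat split; try lra. nra.
Qed.

Lemma comp (p r L t t' : R) : 0 < p -> 0 < r -> 1 <= L -> p <= L * r -> r <= L * p ->
  in_Q2 t -> in_Q2 t' ->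
  0 < p * sin t - r * cos t /\
  p * sin t' - r * cos t' <= (1 + 2 * L * Rabs (t - t')) * (p * sin t - r * cos t).
Proof.
  intros hp hr hL h1 h2 q q'.
  destruct (q2_facts t q) as [hs [hc hsc]].
  set (f := p * sin t - r * cos t).
  assert (a1 : p * 1 <= p * (sin t - cos t)) by (apply Rmult_le_compat_l; lra).
  assert (a2 : r * 1 <= r * (sin t - cos t)) by (apply Rmult_le_compat_l; lra).
  assert (a3 : 0 <= (L - 1) * p * sin t) by (apply Rmult_le_pos; nra).
  assert (a4 : 0 <= (L - 1) * r * (- cos t)) by (apply Rmult_le_pos; nra).
  assert (a5 : 0 <= (L * r - p) * (- cos t)) by (apply Rmult_le_pos; nra).
  assert (a6 : 0 <= (L * p - r) * sin t) by (apply Rmult_le_pos; nra).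
  assert (Hp : p <= L * f) by (unfold f; nra).
  assert (Hr : r <= L * f) by (unfold f; nra).
  assert (0 < f) by nra.
  split; [exact H|].
  pose proof (trig_lip p r t t' (Rlt_le _ _ hp) (Rlt_le _ _ hr)).
  rewrite Rabs_minus_sym in H0. fold f in H0.
  pose proof (Rabs_pos (t - t')). nra.
Qed.

Definition lin_aff (M : mat2) (c : vec2) (x : vec2) : vec2 :=
  (fst (mat_apply M x) + fst c, snd (mat_apply M x) + snd c).

Lemma norm2_le1 x : norm2 x <= 1 -> fst x ^ 2 + snd x ^ 2 <= 1.
Proof.
  unfold norm2; intros h.
  assert (0 <= fst x ^ 2 + snd x ^ 2) by nra.
  pose proof (sqrt_sqrt _ H). pose proof (sqrt_pos (fst x ^ 2 + snd x ^ 2)). nra.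
Qed.

Lemma cs x1 x2 w1 w2 : x1 ^ 2 + x2 ^ 2 <= 1 ->
  Rabs (x1 * w1 + x2 * w2) <= sqrt (w1 ^ 2 + w2 ^ 2).
Proof.
  intros h.
  assert (0 <= w1 ^ 2 + w2 ^ 2) by nra.
  pose proof (sqrt_sqrt _ H). pose proof (sqrt_pos (w1 ^ 2 + w2 ^ 2)).
  set (N := sqrt (w1 ^ 2 + w2 ^ 2)) in *.
  assert ((x1 * w1 + x2 * w2) ^ 2 <= N * N).
  { rewrite H0. assert (0 <= (x1*w2 - x2*w1)^2) by apply pow2_ge_0.
    assert ((x1 ^ 2 + x2 ^ 2) * (w1 ^ 2 + w2 ^ 2) = (x1 * w1 + x2 * w2) ^ 2 + (x1*w2 - x2*w1)^2) by ring.
    assert ((x1 ^ 2 + x2 ^ 2) * (w1 ^ 2 + w2 ^ 2) <= 1 * (w1 ^ 2 + w2 ^ 2)) by (apply Rmult_le_compat_r; lra).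
    lra. }
  apply Rabs_le; split; nra.
Qed.

Lemma proj_len (A : nat -> mat2) (d : nat -> vec2) (a : nat -> nat) (n : nat)
  (M : mat2) (c : vec2) (t : R) :
  (forall x, word_map A d a n x = lin_aff M c x) ->
  let w := (m11 M * - sin t + m21 M * cos t, m12 M * - sin t + m22 M * cos t) in
  0 < norm2 w ->
  proj_length t (D_word A d a n) = 2 * norm2 w.
Proof.
  intros HM w Hw.
  set (e := dot2 c (perp_dir t)).
  set (N := norm2 w) in *.
  assert (key : forall x, dot2 (lin_aff M c x) (perp_dir t) = fst x * fst w + snd x * snd w + e).
  { intros [x1 x2]. unfold e, w, dot2, lin_aff, mat_apply, perp_dir; simpl. ring. }
  assert (bnd : forall x, unit_disc x -> Rabs (fst x * fst w + snd x * snd w) <= N).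
  { intros x hx. apply cs. apply norm2_le1. exact hx. }
  set (x0 := (fst w / N, snd w / N)).
  assert (HN2 : N * N = fst w ^ 2 + snd w ^ 2).
  { unfold N, norm2. apply sqrt_sqrt. nra. }
  assert (hx0 : unit_disc x0).
  { unfold unit_disc, norm2, x0. change (sqrt ((fst w / N) ^ 2 + (snd w / N) ^ 2) <= 1).
    replace ((fst w / N) ^ 2 + (snd w / N) ^ 2) with 1.
    rewrite sqrt_1; lra. field_simplify; [| lra]. rewrite <- HN2. field. lra. }
  assert (v0 : fst x0 * fst w + snd x0 * snd w = N).
  { unfold x0. change (fst w / N * fst w + snd w / N * snd w = N). field_simplify; [|lra]. replace (fst w ^ 2 + snd w ^ 2) with (N*N) by lra. field. lra. }
  set (x1 := (- fst x0, - snd x0)).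
  assert (hx1 : unit_disc x1).
  { unfold unit_disc, norm2, x1 in *. change (sqrt ((- fst x0) ^ 2 + (- snd x0) ^ 2) <= 1). replace ((- fst x0) ^ 2 + (- snd x0) ^ 2) with (fst x0 ^ 2 + snd x0 ^ 2) by ring. exact hx0. }
  assert (v1 : fst x1 * fst w + snd x1 * snd w = - N) by (unfold x1; change (- fst x0 * fst w + - snd x0 * snd w = - N); lra).
  assert (mem : forall x, unit_disc x -> proj_coords t (D_word A d a n) (fst x * fst w + snd x * snd w + e)).
  { intros x hx. exists (word_map A d a n x). split. exists x; split; auto.
    rewrite HM, key. reflexivity. }
  assert (Hl : Lub_Rbar (proj_coords t (D_word A d a n)) = Finite (N + e)).
  { apply is_lub_Rbar_unique. split.
    - intros y [z [[x [hx ->]] ->]]. simpl. rewrite HM, key.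
      pose proof (bnd x hx). apply Rabs_le_between in H. lra.
    - intros b hb. specialize (hb _ (mem x0 hx0)). rewrite v0 in hb. exact hb. }
  assert (Hg : Glb_Rbar (proj_coords t (D_word A d a n)) = Finite (- N + e)).
  { apply is_glb_Rbar_unique. split.
    - intros y [z [[x [hx ->]] ->]]. simpl. rewrite HM, key.
      pose proof (bnd x hx). apply Rabs_le_between in H. lra.
    - intros b hb. specialize (hb _ (mem x1 hx1)). rewrite v1 in hb. exact hb. }
  unfold proj_length. rewrite Hl, Hg. simpl. ring.
Qed.

Definition mmul (M N : mat2) : mat2 :=
  Mat2 (m11 M * m11 N + m12 M * m21 N) (m11 M * m12 N + m12 M * m22 N)
       (m21 M * m11 N + m22 M * m21 N) (m21 M * m12 N + m22 M * m22 N).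

Definition colgood (L : R) (M : mat2) : Prop :=
  0 < m11 M /\ 0 < m12 M /\ 0 < m21 M /\ 0 < m22 M /\
  m11 M <= L * m21 M /\ m21 M <= L * m11 M /\ m12 M <= L * m22 M /\ m22 M <= L * m12 M.

Lemma colgood_mul L M N : colgood L M -> mat_pos N -> colgood L (mmul M N).
Proof.
  unfold colgood, mat_pos, mmul; simpl.
  intros [h1 [h2 [h3 [h4 [h5 [h6 [h7 h8]]]]]]] [g1 [g2 [g3 g4]]].
  repeat split; nra.
Qed.

Definition rat (B : mat2) : R :=
  m11 B / m21 B + m21 B / m11 B + m12 B / m22 B + m22 B / m12 B.

Fixpoint Lsum (A : nat -> mat2) (n : nat) : R :=
  match n with O => 1 | S m => Lsum A m + rat (A m) end.

Lemma rat_pos B : mat_pos B -> 0 <= rat B.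
Proof.
  unfold mat_pos, rat; intros [h1 [h2 [h3 h4]]].
  assert (0 < m11 B / m21 B) by (apply Rdiv_lt_0_compat; auto).
  assert (0 < m21 B / m11 B) by (apply Rdiv_lt_0_compat; auto).
  assert (0 < m12 B / m22 B) by (apply Rdiv_lt_0_compat; auto).
  assert (0 < m22 B / m12 B) by (apply Rdiv_lt_0_compat; auto).
  lra.
Qed.

Lemma Lsum_prop A n : (forall i, (i < n)%nat -> mat_pos (A i)) ->
  1 <= Lsum A n /\ forall i, (i < n)%nat -> rat (A i) <= Lsum A n.
Proof.
  induction n as [|m IH]; intros H.
  - simpl; split; [lra | intros i hi; lia].
  - destruct IH as [IH1 IH2]. { intros i hi; apply H; lia. }
    pose proof (rat_pos _ (H m ltac:(lia))).
    simpl. split; [lra|]. intros i hi.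
    destruct (Nat.eq_dec i m) as [->|ne]. lra.
    pose proof (IH2 i ltac:(lia)). lra.
Qed.

Lemma div_bound x y L : 0 < y -> x / y <= L -> x <= L * y.
Proof.
  intros hy h. replace x with ((x / y) * y) by (field; lra). nra.
Qed.

Lemma colgood_of B L : mat_pos B -> rat B <= L -> colgood L B.
Proof.
  intros hB hr. pose proof hB as [h1 [h2 [h3 h4]]].
  unfold rat in hr.
  assert (0 < m11 B / m21 B) by (apply Rdiv_lt_0_compat; auto).
  assert (0 < m21 B / m11 B) by (apply Rdiv_lt_0_compat; auto).
  assert (0 < m12 B / m22 B) by (apply Rdiv_lt_0_compat; auto).
  assert (0 < m22 B / m12 B) by (apply Rdiv_lt_0_compat; auto).
  unfold colgood. repeat split; auto; apply div_bound; auto; lra.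
Qed.

Definition I2 := Mat2 1 0 0 1.

Lemma repr (A : nat -> mat2) (d : nat -> vec2) (a : nat -> nat) L :
  (forall j, colgood L (A (a j))) ->
  forall n, exists M c, (forall x, word_map A d a n x = lin_aff M c x) /\
    (M = I2 \/ colgood L M).
Proof.
  intros HA n. induction n as [|m [M [c [HM HG]]]].
  - exists I2, (0, 0). split; [|left; reflexivity].
    intros [x1 x2]. unfold lin_aff, mat_apply, I2; simpl. f_equal; ring.
  - exists (mmul M (A (a m))), (lin_aff M c (d (a m))). split.
    + intros x. simpl. rewrite HM. destruct x as [x1 x2].
      unfold lin_aff, affine, mat_apply, mmul; simpl. f_equal; ring.
    + right. destruct HG as [-> | HG].
      * pose proof (HA m) as h. unfold colgood, mmul, I2 in *; simpl.
        destruct h as [h1 [h2 [h3 [h4 [h5 [h6 [h7 h8]]]]]]].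
        repeat split; lra.
      * apply colgood_mul; auto.
        destruct (HA m) as [h1 [h2 [h3 [h4 _]]]]. unfold mat_pos; auto.
Qed.

Lemma sqrt_scale a c t : 0 <= a -> 0 <= c -> 0 <= t -> a <= t * t * c -> sqrt a <= t * sqrt c.
Proof.
  intros ha hc ht h.
  rewrite <- (sqrt_square t) by lra. rewrite <- sqrt_mult by nra.
  apply sqrt_le_1; nra.
Qed.

Lemma ln1p y : 0 <= y -> ln (1 + y) <= y.
Proof.
  intros hy. destruct (Req_dec y 0) as [->|ne].
  - rewrite Rplus_0_r, ln_1. lra.
  - pose proof (exp_ineq1 y ne). rewrite <- (ln_exp y) at 2. apply ln_le; lra.
Qed.

Lemma main_bound L M t t' :
  1 <= L -> in_Q2 t -> in_Q2 t' -> (M = I2 \/ colgood L M) ->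
  let w := fun s => (m11 M * - sin s + m21 M * cos s, m12 M * - sin s + m22 M * cos s) in
  0 < norm2 (w t) /\ 0 < norm2 (w t') /\
  norm2 (w t') <= (1 + 2 * L * Rabs (t - t')) * norm2 (w t).
Proof.
  intros hL q q' HG w.
  pose proof (Rabs_pos (t - t')).
  destruct HG as [-> | [h1 [h2 [h3 [h4 [h5 [h6 [h7 h8]]]]]]]].
  - assert (forall s, norm2 (w s) = 1).
    { intros s. unfold w, norm2, I2; simpl. pose proof (sin2_cos2 s). unfold Rsqr in H0.
      match goal with |- sqrt ?X = 1 => replace X with 1 end. apply sqrt_1. ring_simplify. ring_simplify in H0. lra. }

    rewrite !H0. nra.
  - destruct (comp _ _ L t t' h1 h3 hL h5 h6 q q') as [f1 g1].
    destruct (comp _ _ L t t' h2 h4 hL h7 h8 q q') as [f2 g2].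
    destruct (comp _ _ L t' t h1 h3 hL h5 h6 q' q) as [f1' _].
    destruct (comp _ _ L t' t h2 h4 hL h7 h8 q' q) as [f2' _].
    unfold w, norm2; cbn [fst snd].
    set (a1 := m11 M * sin t - m21 M * cos t) in *.
    set (a2 := m12 M * sin t - m22 M * cos t) in *.
    set (b1 := m11 M * sin t' - m21 M * cos t') in *.
    set (b2 := m12 M * sin t' - m22 M * cos t') in *.
    replace ((m11 M * - sin t + m21 M * cos t) ^ 2 + (m12 M * - sin t + m22 M * cos t) ^ 2)
      with (a1 ^ 2 + a2 ^ 2) by (unfold a1, a2; ring).
    replace ((m11 M * - sin t' + m21 M * cos t') ^ 2 + (m12 M * - sin t' + m22 M * cos t') ^ 2)
      with (b1 ^ 2 + b2 ^ 2) by (unfold b1, b2; ring).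
    split; [apply sqrt_lt_R0; pose proof (pow2_ge_0 a2); pose proof (pow_lt a1 2 f1); lra|].
    split; [apply sqrt_lt_R0; pose proof (pow2_ge_0 b2); pose proof (pow_lt b1 2 f1'); lra|].
    apply sqrt_scale.
    { pose proof (pow2_ge_0 b1); pose proof (pow2_ge_0 b2); lra. }
    { pose proof (pow2_ge_0 a1); pose proof (pow2_ge_0 a2); lra. }
    { nra. }
    set (T := 1 + 2 * L * Rabs (t - t')) in *.
    assert (b1 * b1 <= (T * a1) * (T * a1)) by nra.
    assert (b2 * b2 <= (T * a2) * (T * a2)) by nra.
    simpl. nra.
Qed.

Theorem lemma5p1 (k : nat) (A : nat -> mat2) (d : nat -> vec2) :
  (forall i, (i < k)%nat -> mat_pos (A i)) ->
  (forall i, (i < k)%nat -> Rbar_lt (op_norm (A i)) 1) ->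
  (forall i, (i < k)%nat -> forall x, unit_disc x -> unit_disc (affine (A i) (d i) x)) ->
  exists C : R,
    forall theta theta' : R, in_Q2 theta -> in_Q2 theta' ->
    forall (n : nat) (a : nat -> nat), (forall j, (a j < k)%nat) ->
      word_size A d a n theta - word_size A d a n theta' <= C * Rabs (theta - theta').
Proof.
  intros Hpos _ _.
  destruct (Lsum_prop A k Hpos) as [HL1 HL2].
  set (L := Lsum A k) in *.
  assert (ln2 : 0 < ln 2).
  { rewrite <- ln_1. apply ln_increasing; lra. }
  exists (2 * L / ln 2).
  intros t t' q q' n a Ha.
  assert (HA : forall j, colgood L (A (a j))).
  { intros j. apply colgood_of; auto. }
  destruct (repr A d a L HA n) as [M [c [HM HG]]].
  destruct (main_bound L M t t' HL1 q q' HG) as [p1 [p2 p3]].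
  unfold word_size.
  rewrite (proj_len A d a n M c t HM p1).
  rewrite (proj_len A d a n M c t' HM p2).
  set (N := norm2 _) in p1, p3 |- *.
  set (N' := norm2 _) in p2, p3 |- *.
  replace (2 * N / 2) with N by field. replace (2 * N' / 2) with N' by field.
  unfold log2.
  pose proof (Rabs_pos (t - t')).
  assert (ln N' <= ln N + 2 * L * Rabs (t - t')).
  { apply Rle_trans with (ln ((1 + 2 * L * Rabs (t - t')) * N)).
    apply ln_le; auto.
    rewrite ln_mult by nra. pose proof (ln1p (2 * L * Rabs (t - t')) ltac:(nra)). lra. }
  replace (- (ln N / ln 2) - - (ln N' / ln 2)) with ((ln N' - ln N) / ln 2) by (field; lra).
  replace (2 * L / ln 2 * Rabs (t - t')) with ((2 * L * Rabs (t - t')) / ln 2) by (field; lra).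
  apply Rmult_le_compat_r. left; apply Rinv_0_lt_compat; auto. lra.
Qed.
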